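(* Let $x_1>\cdots>x_N$ be real, $\mathbf y\in\mathbb R^N$, and $\mathbf A\in\{-1,1\}^{N\times N}$ with $\mathbf A_{i,n}=\mathrm{sign}(x_i-x_n)$. Then for every $\beta\ge0$ the problem $\min_{\mathbf z\in\mathbb R^N}\frac12\|\mathbf A\mathbf z-\mathbf y\|_2^2+\beta\|\mathbf z\|_1$ has a unique solution, and the solution of the minimum-norm problem $\min_{\mathbf z}\|\mathbf z\|_1$ subject to $\mathbf A\mathbf z=\mathbf y$ is $\mathbf z^*=\mathbf A^{-1}\mathbf y$.
   Context: $\mathrm{sign}(x)=1$ if $x\ge0$ and $-1$ if $x<0$. (This $\mathbf A$ is the dictionary of a two-layer sign-activated network on one-dimensional data; it is upper triangular-type: entries $1$ on and above the diagonal, $-1$ below.) *)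

(* Defs.v *)
From HB Require Import structures.
From mathcomp Require Import all_boot all_order all_algebra.
From mathcomp Require Import reals.
Set Implicit Arguments. Unset Strict Implicit. Unset Printing Implicit Defensive.
Import Order.TTheory GRing.Theory Num.Theory.
Local Open Scope ring_scope.

Definition sgn {R : realType} (x : R) : R := if 0 <= x then 1 else -1.

Definition dict {R : realType} {N : nat} (x : 'I_N -> R) : 'M[R]_N :=
  \matrix_(i < N, n < N) sgn (x i - x n).

Definition sqnorm2 {R : realType} {N : nat} (v : 'cV[R]_N) : R :=
  \sum_(i < N) (v i 0) ^+ 2.
Definition norm1 {R : realType} {N : nat} (v : 'cV[R]_N) : R :=
  \sum_(i < N) `|v i 0|.

Definition lasso_obj {R : realType} {N : nat} (A : 'M[R]_N) (y : 'cV[R]_N)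
  (beta : R) (z : 'cV[R]_N) : R :=
  2^-1 * sqnorm2 (A *m z - y) + beta * norm1 z.

Definition is_minimizer {R : realType} {N : nat} (f : 'cV[R]_N -> R)
  (z : 'cV[R]_N) : Prop := forall z' : 'cV[R]_N, f z <= f z'.

Definition is_minnorm_sol {R : realType} {N : nat} (A : 'M[R]_N)
  (y : 'cV[R]_N) (z : 'cV[R]_N) : Prop :=
  A *m z = y /\ forall z' : 'cV[R]_N, A *m z' = y -> norm1 z <= norm1 z'.

(* Main.v *)
Require Import Defs.
From HB Require Import structures.
From mathcomp Require Import all_boot all_order all_algebra.
From mathcomp Require Import reals.
From mathcomp Require Import ring lra zify.
From mathcomp Require Import all_classical all_reals all_analysis.
Import Order.TTheory GRing.Theory Num.Theory.
Import numFieldNormedType.Exports.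
Local Open Scope classical_set_scope.
Local Open Scope ring_scope.


Section C.
Variables (R : realType) (T : topologicalType).
Lemma cD (f g : T -> R) : continuous f -> continuous g -> continuous (fun r => f r + g r).
Proof. move=> hf hg x; apply: cvgD; [exact: hf|exact: hg]. Qed.
Lemma cM (f g : T -> R) : continuous f -> continuous g -> continuous (fun r => f r * g r).
Proof. move=> hf hg x; apply: cvgM; [exact: hf|exact: hg]. Qed.
Lemma cS (I : Type) (s : seq I) (F : I -> T -> R) : (forall i, continuous (F i)) ->
  continuous (fun r => \sum_(i <- s) F i r).
Proof.
move=> hF; elim: s => [|a s IH].
  have -> : (fun r : T => \sum_(i <- [::]) F i r) = fun=> 0 by apply: funext => r; rewrite big_nil.
  exact: cst_continuous.
have -> : (fun r : T => \sum_(i <- a :: s) F i r) = fun r => F a r + \sum_(i <- s) F i r.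
  by apply: funext => r; rewrite big_cons.
exact: cD.
Qed.
Lemma cN (f : T -> R) : continuous f -> continuous (fun r => `|f r|).
Proof. move=> hf x. apply: continuous_comp; [exact: hf| exact: norm_continuous]. Qed.
End C.

Section S.
Variables (R : realType) (N : nat) (x : 'I_N -> R).
Hypothesis hx : forall i j : 'I_N, (i < j)%N -> x j < x i.

Lemma dictE i n : dict x i n = if (i <= n)%N then 1 else -1.
Proof.
rewrite /dict mxE /sgn; case: (ltngtP i n) => h.
- rewrite subr_ge0 (ltW (hx _ _ h)) ?(ltnW h).
  by [].
- by rewrite subr_ge0 leNgt (hx _ _ h).
- have -> : i = n by apply: val_inj.
  by rewrite subrr lexx.
Qed.

Lemma dict_ker (z : 'cV[R]_N) : dict x *m z = 0 -> z = 0.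
Proof.
move=> hz.
pose S (i : nat) := \sum_(n < N) (if (i <= n)%N then z n 0 else - z n 0).
have hS (i : 'I_N) : S i = 0.
  have := congr1 (fun M : 'cV[R]_N => M i 0) hz; rewrite !mxE => <-.
  apply: eq_bigr => n _; rewrite dictE; case: ifP => _; ring.
have hD (i : 'I_N) : S i - S i.+1 = z i 0 + z i 0.
  rewrite /S -sumrB (bigD1 i) //= leqnn ltnn big1 ?addr0; first by rewrite opprK.
  move=> n /negbTE hn; case: (ltngtP i n) => h.
  - by rewrite subrr.
  - by rewrite subrr.
  - by move: hn; rewrite (_ : n = i) ?eqxx //; apply: val_inj.
have hz1 (n : 'I_N) : (n.+1 < N)%N -> z n 0 = 0.
  move=> hn; have := hD n; rewrite hS (hS (Ordinal hn)) subrr => /esym/eqP.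
  by rewrite -mulr2n mulrn_eq0 /= => /eqP.
apply/matrixP => n j; rewrite (ord1 j) mxE.
case: (ltnP n.+1 N) => hn; first exact: hz1.
have := hS n; rewrite /S (bigD1 n) //= leqnn big1 ?addr0 // => m hm.
have hmn : (m.+1 < N)%N.
  have hm' : (m : nat) != n := hm.
  have := ltn_ord m; have := ltn_ord n; lia.
by rewrite hz1 // oppr0; case: ifP.
Qed.

Lemma dict_unit : dict x \in unitmx.
Proof.
rewrite unitmxE unitfE -det_tr; apply/det0P => -[v hv0 hv].
move/eqP: hv0; apply; apply: trmx_inj; rewrite trmx0; apply: dict_ker.
by rewrite -[dict x]trmxK -trmx_mul hv trmx0.
Qed.

Lemma sqnorm2_ge0 (v : 'cV[R]_N) : 0 <= sqnorm2 v.
Proof. by apply: sumr_ge0 => i _; rewrite sqr_ge0. Qed.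

Lemma norm1_ge0 (v : 'cV[R]_N) : 0 <= norm1 v.
Proof. by apply: sumr_ge0 => i _. Qed.

Lemma sqnorm2_eq0 (v : 'cV[R]_N) : sqnorm2 v <= 0 -> v = 0.
Proof.
move=> h; have h0 : sqnorm2 v = 0 by apply/eqP; rewrite eq_le h sqnorm2_ge0.
move/eqP: h0; rewrite psumr_eq0 => [/allP hall|i _]; last by rewrite sqr_ge0.
apply/matrixP => i j; rewrite (ord1 j) mxE.
by have := hall i (mem_index_enum i); rewrite /= sqrf_eq0 => /eqP.
Qed.

Lemma lasso_uniq (y : 'cV[R]_N) (beta : R) (z1 z2 : 'cV[R]_N) : 0 <= beta ->
  is_minimizer (lasso_obj (dict x) y beta) z1 ->
  is_minimizer (lasso_obj (dict x) y beta) z2 -> z1 = z2.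
Proof.
move=> hb h1 h2; set A := dict x.
set m := 2^-1 *: (z1 + z2).
have hAm : A *m m = 2^-1 *: (A *m z1 + A *m z2) by rewrite -scalemxAr mulmxDr.
have e1 : sqnorm2 (A *m m - y) = 2^-1 * sqnorm2 (A *m z1 - y) + 2^-1 * sqnorm2 (A *m z2 - y)
   - 4^-1 * sqnorm2 (A *m (z1 - z2)).
  rewrite /sqnorm2 !mulr_sumr -big_split -sumrB /=; apply: eq_bigr => i _.
  rewrite hAm mulmxBr !mxE.
  by field.
have e2 : norm1 m <= 2^-1 * norm1 z1 + 2^-1 * norm1 z2.
  rewrite /norm1 !mulr_sumr -big_split /=; apply: ler_sum => i _.
  rewrite !mxE normrM ger0_norm ?invr_ge0 ?ler0n // -mulrDr ler_wpM2l ?invr_ge0 ?ler0n //.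
  exact: ler_normD.
have hm1 := h1 m; have h12 := h1 z2; have h21 := h2 z1.
move: hm1 h12 h21; rewrite /lasso_obj e1 => hm1 h12 h21.
have hs := sqnorm2_ge0 (A *m (z1 - z2)).
have hbe := ler_wpM2l hb e2.
have hq : sqnorm2 (A *m (z1 - z2)) <= 0 by nra.
apply/eqP; rewrite -subr_eq0; apply/eqP; apply: dict_ker; exact: sqnorm2_eq0.
Qed.

Lemma lasso_exists (y : 'cV[R]_N) (beta : R) : 0 < beta ->
  exists z, is_minimizer (lasso_obj (dict x) y beta) z.
Proof.
move=> hb; set A := dict x; set f := lasso_obj A y beta.
pose g (r : 'rV[R]_N) := f r^T.
have gE : g = fun r => 2^-1 * \sum_i ((\sum_j A i j * r 0 j - y i 0) * (\sum_j A i j * r 0 j - y i 0))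
   + beta * \sum_i `|r 0 i|.
  apply: funext => r; rewrite /g /f /lasso_obj /sqnorm2 /norm1.
  congr (_ * _ + _ * _); apply: eq_bigr => i _; rewrite !mxE ?expr2 //.
  congr (_ * _); congr (_ - _); apply: eq_bigr => j _; rewrite !mxE //.
have gc : continuous g.
  rewrite gE; apply: cD; apply: cM; try exact: cst_continuous.
  apply: cS => i; apply: cM; (apply: cD; [|exact: cst_continuous]);
    apply: cS => j; (apply: cM; [exact: cst_continuous|]); exact: coord_continuous.
  apply: cS => i; apply: cN; exact: coord_continuous.
have f0 : 0 <= f 0.
  rewrite /f /lasso_obj; apply: addr_ge0; first by rewrite mulr_ge0 ?invr_ge0 ?ler0n ?sqnorm2_ge0.
  apply: mulr_ge0; [exact: ltW | exact: norm1_ge0].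
set M := f 0 / beta.
have M0 : 0 <= M by apply: divr_ge0 => //; exact: ltW.
pose K := [set r : 'rV[R]_N | forall i, `[- M, M]%classic (r ord0 i)].
have Kc : compact K.
  by apply: (@rV_compact _ _ (fun=> `[- M, M]%classic)) => i; exact: segment_compact.
have K0 : K !=set0.
  exists 0 => i /=; rewrite mxE in_itv /= oppr_le0 M0 //.
have [c cK cmin] := compact_EVT_min K0 Kc (continuous_subspaceT gc).
exists c^T => z'.
have hfz : beta * norm1 z' <= f z'.
  rewrite /f /lasso_obj lerDr mulr_ge0 ?invr_ge0 ?ler0n ?sqnorm2_ge0 //.
have [/forallP hin|/forallPn [i hi]] := boolP [forall i, `|z' i 0| <= M].
  have : z'^T \in K.
    apply: mem_set => i /=; rewrite mxE in_itv /= -ler_norml; exact: hin.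
  by move/cmin; rewrite /g trmxK.
have g0 : g c <= g 0 by apply: cmin; apply: mem_set => k /=; rewrite mxE in_itv /= oppr_le0 M0.
have hg0 : g 0 = f 0 by rewrite /g trmx0.
have hbM : beta * M = f 0 by rewrite /M mulrC divfK // gt_eqF.
have hi' : M < `|z' i 0| by rewrite ltNge.
have hn : `|z' i 0| <= norm1 z'.
  rewrite /norm1 (bigD1 i) //= lerDl; exact: sumr_ge0.
have : beta * M < beta * `|z' i 0| by rewrite ltr_pM2l.
have : beta * `|z' i 0| <= beta * norm1 z' by rewrite ler_wpM2l // ltW.
rewrite -/(g c); lra.
Qed.
End S.

Theorem proposition5 (R : realType) (N : nat) (x : 'I_N -> R) (y : 'cV[R]_N)
  (hx : forall i j : 'I_N, (i < j)%N -> x j < x i) :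
  (forall beta : R, 0 <= beta ->
     exists z : 'cV[R]_N, is_minimizer (lasso_obj (dict x) y beta) z /\
       forall z' : 'cV[R]_N,
         is_minimizer (lasso_obj (dict x) y beta) z' -> z' = z) /\
  (dict x \in unitmx /\
   is_minnorm_sol (dict x) y (invmx (dict x) *m y) /\
   forall z' : 'cV[R]_N, is_minnorm_sol (dict x) y z' -> z' = invmx (dict x) *m y).
Proof.
have hu := @dict_unit _ _ _ hx.
split.
  move=> beta hb.
  have [z hz] : exists z, is_minimizer (lasso_obj (dict x) y beta) z.
    have [hb0|hbp] := eqVneq beta 0.
      exists (invmx (dict x) *m y) => z'.
      rewrite /lasso_obj hb0 !mul0r !addr0 mulKVmx // subrr.
      have -> : sqnorm2 (0 : 'cV[R]_N) = 0 by rewrite /sqnorm2 big1 // => i _; rewrite mxE expr0n.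
      by rewrite mulr0 mulr_ge0 ?invr_ge0 ?ler0n ?sqnorm2_ge0.
    have hbp' : 0 < beta by rewrite lt_neqAle eq_sym hbp hb.
    exact: (@lasso_exists _ _ x y beta hbp').
  exists z; split => // z' hz'; exact: (@lasso_uniq _ _ _ hx _ _ _ _ hb hz' hz).
split => //.
have hsol : forall z', dict x *m z' = y -> z' = invmx (dict x) *m y.
  by move=> z' <-; rewrite mulKmx.
split.
  split; first by rewrite mulKVmx.
  by move=> z' /hsol ->.
by move=> z' [/hsol].
Qed.
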